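(* In the $2^K$ factorial setup of the context, let $f\in\mathbb R^Q$, $f^\star=f[\mathbb M^\star]$, $v^2=f^\top V_{\hat Y}f$ and $v_{\mathrm R}^2=f^{\star\top}V_{\hat Y}f^\star$, and assume that both $\hat\gamma=f^\top\hat Y$ and $\hat\gamma_{\mathrm R}=f[\hat{\mathbb M}]^\top\hat Y$ (suitably standardized) converge to a normal distribution as $N\to\infty$. (i) If the eigenvectors of $V_{\hat Y}$ are given by the columns of the contrast matrix $G$ (i.e. $V_{\hat Y}=Q^{-1}G\Lambda G^\top$ for a diagonal $\Lambda$), then $v_{\mathrm R}^2/v^2\le1$. (ii) If $s^\star$ denotes the number of nonzero entries of $f$, then $v_{\mathrm R}^2/v^2\le\kappa(V_{\hat Y})\, s^\star|\mathbb M^\star|/Q$, where $\kappa(V)$ is the ratio of the largest to the smallest eigenvalue of $V$.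
   Context: $\mathcal T=\{0,1\}^K$, $Q=2^K$, lexicographic order. For $\mathcal K\subseteq[K]$, $g_{\mathcal K}(z)=\prod_{k\in\mathcal K}(2z_k-1)$, $g_\emptyset=\mathbf 1_Q$; $G$ the $Q\times Q$ matrix of columns $g_{\mathcal K}$ ($G^\top G=QI_Q$). For a set $\mathbb M$ of subsets of $[K]$, $f[\mathbb M]=Q^{-1}G(\cdot,\mathbb M)G(\cdot,\mathbb M)^\top f$, with $G(\cdot,\mathbb M)$ the columns indexed by $\mathbb M$. $N$ units with potential outcomes $Y_i(z)$, means $\bar Y(z)$, factorial effects $\tau_{\mathcal K}=Q^{-1}g_{\mathcal K}^\top\bar Y$; $\mathbb M^\star=\{\emptyset\}\cup\{\mathcal K\ne\emptyset:\tau_{\mathcal K}\neq0\}$. Completely randomized design with $N(z)\ge2$ units at level $z$; $\hat Y=(\hat Y(z))_z$ the vector of arm-wise sample means, $V_{\hat Y}$ its covariance matrix (assumed nonsingular). $\hat{\mathbb M}$ is a data-selected working model (output of forward screening). *)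

(* Defs.v *)
From HB Require Import structures.
From mathcomp Require Import all_boot all_order all_algebra.
From mathcomp Require Import reals.
Set Implicit Arguments. Unset Strict Implicit. Unset Printing Implicit Defensive.
Import Order.TTheory GRing.Theory Num.Theory.
Local Open Scope ring_scope.

Section Factorial.
Variables (R : realType) (K : nat).

(* Treatment levels z in {0,1}^K are indexed by 'I_(2^K) in lexicographic
   order: the first factor is the most significant bit. *)
Definition Q : nat := 2 ^ K.

Definition zbit (i : 'I_Q) (k : 'I_K) : bool := odd (i %/ 2 ^ (K - k.+1)).

Definition gvec (S : {set 'I_K}) : 'cV[R]_Q :=
  \col_i \prod_(k in S) (2 * (zbit i k)%:R - 1).

Definition proj (M : {set {set 'I_K}}) (f : 'cV[R]_Q) : 'cV[R]_Q :=
  (Q%:R)^-1 *: \sum_(S in M) (gvec S *m (gvec S)^T *m f).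

Definition qform (V : 'M[R]_Q) (f : 'cV[R]_Q) : R := ((f^T *m V *m f) 0 0).

Variable N : nat.
Variable Y : 'I_N -> 'I_Q -> R.

Definition Ybar : 'cV[R]_Q := \col_z ((N%:R)^-1 * \sum_i Y i z).

Definition tau (S : {set 'I_K}) : R := (Q%:R)^-1 * ((gvec S)^T *m Ybar) 0 0.

Definition Mstar : {set {set 'I_K}} := [set S | (S == set0) || (tau S != 0)].

Definition Scov (z z' : 'I_Q) : R :=
  ((N%:R - 1)^-1) * \sum_i (Y i z - Ybar z 0) * (Y i z' - Ybar z' 0).

(* covariance matrix of the vector of arm-wise sample means under the
   completely randomized design with N(z) = n z units at level z *)
Definition VYhat (n : 'I_Q -> nat) : 'M[R]_Q :=
  \matrix_(z, z') ((z == z')%:R * Scov z z / (n z)%:R - Scov z z' / N%:R).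

End Factorial.

Definition is_max_eig (R : realType) (m : nat) (V : 'M[R]_m) (a : R) : Prop :=
  eigenvalue V a /\ forall b, eigenvalue V b -> b <= a.
Definition is_min_eig (R : realType) (m : nat) (V : 'M[R]_m) (a : R) : Prop :=
  eigenvalue V a /\ forall b, eigenvalue V b -> a <= b.

(* Main.v *)
Require Import Defs.
From HB Require Import structures.
From mathcomp Require Import all_boot all_order all_algebra.
From mathcomp Require Import reals.
From mathcomp Require Import ring lra zify.
From mathcomp Require spectral complex.
Import Order.TTheory GRing.Theory Num.Theory.
Local Open Scope ring_scope.

Module Helpers.
Set Implicit Arguments. Unset Strict Implicit. Unset Printing Implicit Defensive.

Lemma CS (R : realType) (I : finType) (w b : I -> R) : (forall i, 0 <= w i) ->
  (\sum_i w i * b i) ^+ 2 <= (\sum_i w i) * \sum_i w i * b i ^+ 2.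
Proof.
move=> w0; set W := \sum_i w i; set m := \sum_i w i * b i.
have W0 : 0 <= W by apply: sumr_ge0 => i _.
case: (eqVneq W 0) => [WE|Wn0].
  have wi0 i : w i = 0 by apply: (psumr_eq0P (fun i _ => w0 i) WE).
  rewrite /m big1 => [|i _]; last by rewrite wi0 mul0r.
  by rewrite expr0n /= WE mul0r.
have Wp : 0 < W by rewrite lt_def Wn0.
have H : 0 <= \sum_i w i * (W * b i - m) ^+ 2.
  by apply: sumr_ge0 => i _; apply: mulr_ge0 => //; exact: sqr_ge0.
have E : \sum_i w i * (W * b i - m) ^+ 2 =
  W * (W * \sum_i w i * b i ^+ 2 - m ^+ 2).
  transitivity (\sum_i (W ^+ 2 * (w i * b i ^+ 2) - (2 * W * m) * (w i * b i)
      + m ^+ 2 * w i)).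
    by apply: eq_bigr => i _; ring.
  rewrite big_split sumrB /= -!mulr_sumr -/W -/m; ring.
rewrite E in H.
have := H; rewrite pmulr_rge0 // subr_ge0 => H2.
by [].
Qed.

Lemma qformE (R : realType) (K : nat) (V : 'M[R]_(Q K)) h :
  qform V h = \sum_z \sum_z' h z 0 * V z z' * h z' 0.
Proof.
rewrite /qform mxE exchange_big /=; apply: eq_bigr => z' _.
rewrite mxE mulr_suml; apply: eq_bigr => z _.
by rewrite mxE.
Qed.

Section PSD.
Variables (R : realType) (K N : nat) (Y : 'I_N -> 'I_(Q K) -> R) (n : 'I_(Q K) -> nat).
Hypothesis hn2 : forall z, (2 <= n z)%N.
Hypothesis hnN : (\sum_z n z)%N = N.

Let e i z := Y i z - Ybar Y z 0.

Lemma N_ge2 : (2 <= N)%N.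
Proof.
have Q0 : (0 < Q K)%N by rewrite expn_gt0.
pose z0 := Ordinal Q0.
rewrite -hnN (bigD1 z0) //=; apply: leq_trans (hn2 z0) _; exact: leq_addr.
Qed.

Lemma Scov_sym z z' : Scov Y z z' = Scov Y z' z.
Proof. by rewrite /Scov; congr (_ * _); apply: eq_bigr => i _; rewrite mulrC. Qed.

Lemma VY_sym : (VYhat Y n)^T = VYhat Y n.
Proof.
apply/matrixP => z z'; rewrite !mxE Scov_sym.
by case: (eqVneq z z') => [->|h] //; rewrite !mul0r.
Qed.

Lemma VY_psd h : 0 <= qform (VYhat Y n) h.
Proof.
have N2 := N_ge2.
have Np : 0 < N%:R :> R by rewrite ltr0n; lia.
have N1p : 0 < N%:R - 1 :> R.
  by rewrite subr_gt0 (_ : 1 = 1%:R) // ltr_nat; lia.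
set c := (N%:R - 1 : R)^-1.
have Bexp : \sum_z \sum_z' h z 0 * Scov Y z z' * h z' 0 =
    c * \sum_i (\sum_z h z 0 * e i z) ^+ 2.
  transitivity (\sum_z \sum_z' c * \sum_i (h z 0 * e i z) * (h z' 0 * e i z')).
    apply: eq_bigr => z _; apply: eq_bigr => z' _.
    rewrite /Scov -/c (mulrC (h z 0)) -!mulrA; congr (c * _).
    rewrite mulr_suml; apply: eq_bigr => i _; rewrite /e; ring.
  under eq_bigr do rewrite -mulr_sumr.
  rewrite -mulr_sumr; congr (_ * _).
  under eq_bigr do rewrite exchange_big /=.
  rewrite exchange_big /=; apply: eq_bigr => i _.
  rewrite expr2 [RHS]mulr_suml; apply: eq_bigr => z _; by rewrite mulr_sumr.
have Aexp : \sum_z \sum_z' h z 0 * ((z == z')%:R * Scov Y z z / (n z)%:R) * h z' 0 =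
    c * \sum_i \sum_z (n z)%:R * ((h z 0 * e i z) / (n z)%:R) ^+ 2.
  transitivity (\sum_z h z 0 * (Scov Y z z / (n z)%:R) * h z 0).
    apply: eq_bigr => z _; rewrite (bigD1 z) //= big1 => [|z' hz'].
      by rewrite eqxx mul1r addr0.
    by rewrite eq_sym (negbTE hz') !mul0r mulr0 mul0r.
  rewrite exchange_big mulr_sumr; apply: eq_bigr => z _.
  have nz : (n z)%:R != 0 :> R by rewrite pnatr_eq0; have := hn2 z; lia.
  rewrite /Scov -/c.
  transitivity (c * \sum_i (Y i z - Ybar Y z 0) * (Y i z - Ybar Y z 0) * (h z 0 * h z 0 / (n z)%:R)).
    rewrite -mulr_suml; ring.
  congr (c * _); apply: eq_bigr => i _; rewrite /e; field; exact: nz.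
rewrite (@qformE R K (VYhat Y n) h).
rewrite [X in 0 <= X](_ : _ = \sum_z \sum_z' h z 0 * ((z == z')%:R * Scov Y z z / (n z)%:R) * h z' 0
  - (N%:R)^-1 * \sum_z \sum_z' h z 0 * Scov Y z z' * h z' 0); last first.
  rewrite mulr_sumr -sumrB; apply: eq_bigr => z _.
  rewrite mulr_sumr -sumrB; apply: eq_bigr => z' _.
  by rewrite mxE; ring.
rewrite Aexp Bexp mulrCA -mulrBr; apply: mulr_ge0.
  by rewrite /c invr_ge0 ltW.
rewrite mulr_sumr -sumrB; apply: sumr_ge0 => i _.
rewrite subr_ge0.
have := @CS R _ (fun z => (n z)%:R) (fun z => h z 0 * e i z / (n z)%:R) (fun z => ler0n _ _).
rewrite -natr_sum hnN.
have -> : \sum_z (n z)%:R * (h z 0 * e i z / (n z)%:R) = \sum_z h z 0 * e i z.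
  apply: eq_bigr => z _.
  have nz : (n z)%:R != 0 :> R by rewrite pnatr_eq0; have := hn2 z; lia.
  by field; exact: nz.
move=> H; rewrite -(ler_pM2l Np) mulrA mulfV ?gt_eqF // mul1r.
exact: H.
Qed.
End PSD.


Lemma bits_nat K : forall i j, (i < 2 ^ K)%N -> (j < 2 ^ K)%N ->
  (forall m, (m < K)%N -> odd (i %/ 2 ^ m) = odd (j %/ 2 ^ m)) -> i = j.
Proof.
elim: K => [|K IH] i j.
  by rewrite expn0 ltnS leqn0 => /eqP -> ; rewrite ltnS leqn0 => /eqP ->.
move=> hi hj h.
have h0 := h 0%N (ltn0Sn K); rewrite expn0 !divn1 in h0.
have e : i./2 = j./2.
  apply: IH.
  - by rewrite -divn2 ltn_divLR // -expnSr.
  - by rewrite -divn2 ltn_divLR // -expnSr.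
  move=> m hm; have := h m.+1 hm.
  by rewrite expnS !divnMA !divn2.
by rewrite -[i]odd_double_half -[j]odd_double_half h0 e.
Qed.

Section Comb.
Variables (R : realType) (K : nat).

Lemma zbit_inj (i j : 'I_(Q K)) : (forall k, zbit i k = zbit j k) -> i = j.
Proof.
move=> h; apply/val_inj/(@bits_nat K); rewrite -?/(Q K) ?ltn_ord //.
move=> m hm.
have hk : (K - m.+1 < K)%N by lia.
have := h (Ordinal hk); rewrite /zbit /=.
by have -> : (K - (K - m.+1).+1)%N = m by lia.
Qed.

Definition bitsf (i : 'I_(Q K)) : {ffun 'I_K -> bool} := [ffun k => zbit i k].

Lemma bitsf_bij : bijective bitsf.
Proof.
apply: inj_card_bij.
  by move=> i j /ffunP h; apply: zbit_inj => k; have := h k; rewrite !ffunE.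
by rewrite card_ffun card_bool !card_ord.
Qed.

Lemma sum_bits (F : {ffun 'I_K -> bool} -> R) :
  \sum_(i < Q K) F (bitsf i) = \sum_b F b.
Proof. by symmetry; apply: reindex; exact: onW_bij bitsf_bij. Qed.

Definition sgb (b : bool) : R := 2 * b%:R - 1.

Lemma sgb2 b : sgb b * sgb b = 1.
Proof. by case: b; rewrite /sgb /=; ring. Qed.

Lemma gvecE (S : {set 'I_K}) (i : 'I_(Q K)) : gvec R S i 0 = \prod_(k in S) sgb (zbit i k).
Proof. by rewrite mxE. Qed.

Lemma gprod (S T : {set 'I_K}) (i : 'I_(Q K)) : gvec R S i 0 * gvec R T i 0 =
  \prod_k (if (k \in S) != (k \in T) then sgb (zbit i k) else 1).
Proof.
rewrite !gvecE big_mkcond [X in _ * X]big_mkcond -big_split /=.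
apply: eq_bigr => k _.
by case: (k \in S); case: (k \in T); rewrite /= ?mulr1 ?mul1r ?sgb2.
Qed.

Lemma gorth (S T : {set 'I_K}) : ((gvec R S)^T *m gvec R T) 0 0 = (S == T)%:R * (Q K)%:R.
Proof.
rewrite mxE; under eq_bigr do rewrite mxE gprod.
case: (eqVneq S T) => [<-|neq].
  rewrite (eq_bigr (fun _ => 1)) => [|i _]; last by rewrite big1 // => k _; case: (k \in S).
  by rewrite sumr_const card_ord /= mulr1n mul1r.
have : ~~ [forall k, (k \in S) == (k \in T)].
  by apply: contra neq => /forallP h; apply/eqP/setP => k; exact/eqP/h.
rewrite negb_forall => /existsP [k0 hk0].
rewrite mul0r.
pose G k (b : bool) := if (k \in S) != (k \in T) then sgb b else 1.
transitivity (\sum_(i < Q K) \prod_k G k (bitsf i k)).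
  by apply: eq_bigr => i _; apply: eq_bigr => k _; rewrite ffunE.
rewrite (sum_bits (fun f => \prod_k G k (f k))) -bigA_distr_bigA /=.
rewrite (bigD1 k0) //= big_bool /G hk0 /sgb /=.
have -> : (2 * 1 - 1 + (2 * 0 - 1)) = 0 :> R by ring.
by rewrite mul0r.
Qed.

Lemma gsq (S : {set 'I_K}) (i : 'I_(Q K)) : gvec R S i 0 * gvec R S i 0 = 1.
Proof. by rewrite gprod big1 // => k _; rewrite eqxx. Qed.


Local Notation Qr := ((Q K)%:R : R).

Lemma Qr_gt0 : 0 < Qr.
Proof. by rewrite ltr0n expn_gt0. Qed.

Lemma Qr_neq0 : Qr != 0.
Proof. by rewrite gt_eqF // Qr_gt0. Qed.

Definition cf (h : 'cV[R]_(Q K)) (S : {set 'I_K}) : R := ((gvec R S)^T *m h) 0 0.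

Lemma mx11 (X Y : 'M[R]_1) : (X *m Y) 0 0 = X 0 0 * Y 0 0.
Proof. by rewrite mxE big_ord1. Qed.

Lemma lem_uvvh (u v h : 'cV[R]_(Q K)) :
  (u^T *m (v *m v^T *m h)) 0 0 = (u^T *m v) 0 0 * (v^T *m h) 0 0.
Proof. by rewrite -mulmxA mulmxA mx11. Qed.

Lemma trsym (u v : 'cV[R]_(Q K)) : (u^T *m v) 0 0 = (v^T *m u) 0 0.
Proof. by rewrite -[u^T *m v]trmxK trmx_mul trmxK mxE. Qed.

Lemma sum_delta (M : {set {set 'I_K}}) (F : {set 'I_K} -> R) T :
  \sum_(S in M) (S == T)%:R * F S = (T \in M)%:R * F T.
Proof.
rewrite big_mkcond (bigD1 T) //= big1 => [|S nST]; last first.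
  by rewrite (negbTE nST) mul0r if_same.
by rewrite eqxx addr0; case: (T \in M); rewrite ?mul1r ?mul0r.
Qed.

Lemma proj_cf M f T : cf (proj M f) T = (T \in M)%:R * cf f T.
Proof.
rewrite /cf /proj -scalemxAr mxE mulmx_sumr summxE.
under eq_bigr => S _ do rewrite lem_uvvh gorth eq_sym -mulrA.
rewrite sum_delta mulrCA mulKf //; exact: Qr_neq0.
Qed.

Lemma qform_G (Lambda : {set 'I_K} -> R) h :
  qform (Qr^-1 *: \sum_S Lambda S *: (gvec R S *m (gvec R S)^T)) h =
  Qr^-1 * \sum_S Lambda S * cf h S ^+ 2.
Proof.
rewrite /qform -scalemxAr -scalemxAl mxE; congr (_ * _).
rewrite mulmx_sumr mulmx_suml summxE; apply: eq_bigr => S _.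
rewrite -scalemxAr -scalemxAl mxE; congr (_ * _).
by rewrite -mulmxA lem_uvvh trsym expr2.
Qed.

Lemma norm_proj M f : ((proj M f)^T *m proj M f) 0 0 =
  Qr^-1 * \sum_(S in M) cf f S ^+ 2.
Proof.
rewrite {2}/proj -scalemxAr mxE mulmx_sumr summxE; congr (_ * _).
apply: eq_bigr => S hS.
by rewrite lem_uvvh (trsym (proj M f)) -/(cf _ S) proj_cf hS mul1r expr2.
Qed.

Lemma cf_bound f S : cf f S ^+ 2 <= #|[set i | f i 0 != 0]|%:R * (f^T *m f) 0 0.
Proof.
pose w i := ((f i 0 != 0)%:R : R).
pose b i := gvec R S i 0 * f i 0.
have E1 : cf f S = \sum_i w i * b i.
  rewrite /cf mxE; apply: eq_bigr => i _; rewrite mxE /w /b.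
  by case: eqP => [->|_]; rewrite ?mulr0 ?mul1r.
have E2 : \sum_i w i = #|[set i | f i 0 != 0]|%:R.
  rewrite -sum1_card natr_sum [RHS]big_mkcond /=; apply: eq_bigr => i _.
  by rewrite inE /w; case: (f i 0 != 0).
have E3 : \sum_i w i * b i ^+ 2 <= (f^T *m f) 0 0.
  rewrite mxE; apply: ler_sum => i _; rewrite mxE /w /b.
  case: (f i 0 != 0); rewrite ?mul1r ?mul0r ?sqr_ge0 //.
  by rewrite exprMn expr2 gsq mul1r expr2.
rewrite E1; apply: le_trans (@CS R _ w b (fun i => ler0n _ _)) _.
by rewrite E2; apply: ler_wpM2l => //; exact: ler0n.
Qed.

End Comb.

Module SpecM.
Import spectral complex.
Local Open Scope ring_scope.
Local Open Scope sesquilinear_scope.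
Section Spec.
Variable R : realType.
Local Notation C := (complex.complex (Num.RealClosedField.sort R)).
Local Notation toC := (@complex.real_complex_def R (Phant R)).

Lemma toC_real (a : R) : (toC a : C) \is Num.real.
Proof. by rewrite complex.complex_real. Qed.

Lemma conj_toC (a : R) : (toC a : C)^* = toC a.
Proof. exact/conj_Creal/toC_real. Qed.

Lemma spec_decomp n (V : 'M[R]_n) : V^T = V -> forall x : 'cV[R]_n,
  exists w e : 'I_n -> R, (forall j, 0 <= w j) /\ (forall j, eigenvalue V (e j)) /\
   (x^T *m V *m x) 0 0 = \sum_j w j * e j /\ (x^T *m x) 0 0 = \sum_j w j.
Proof.
move=> Vsym x.
pose Vc := map_mx toC V.
have Vh : Vc \is hermsymmx.
  apply/is_hermitianmxP; rewrite expr0 scale1r; apply/matrixP => i j.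
  have VT k l : V k l = V l k by rewrite -[V in LHS]Vsym mxE.
  by rewrite !mxE conj_toC VT.
have := hermitian_normalmx Vh => /orthomx_spectralP.
set P := spectralmx Vc; set d := spectral_diag Vc => Ve.
have Pu : P \is unitarymx := spectral_unitarymx Vc.
have dreal := hermitian_spectral_diag_real Vh.
rewrite invmx_unitary // in Ve.
pose xc := map_mx toC x. pose y := P *m xc.
have PPt : P *m P ^t* = 1%:M by apply/unitarymxP.
have PtP : P ^t* *m P = 1%:M by apply: mulmx1C.
have ytc : y ^t* = xc^T *m P ^t*.
  rewrite /y trmx_mul map_mxM; congr (_ *m _).
  by apply/matrixP => i j; rewrite !mxE; exact: conj_toC.
have yyr j : y j 0 * (y j 0)^* \is Num.real := ger0_real (mul_conjC_ge0 _).
have dr j : d 0 j \is Num.real by apply: (mxOverP dreal).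
exists (fun j => complex.Re (y j 0 * (y j 0)^* )), (fun j => complex.Re (d 0 j)).
split.
  move=> j; have := mul_conjC_ge0 (y j 0); rewrite lecE => /andP[_].
  by [].
split.
  move=> j; rewrite eigenvalue_root_char -(fmorph_root (real_complex R)).
  rewrite map_char_poly [X in root _ X](_ : _ = d 0 j); last exact: RRe_real (dr j).
  rewrite -eigenvalue_root_char.
  apply/eigenvalueP; exists (row j P).
    rewrite -row_mul.
    have -> : P *m Vc = diag_mx d *m P by rewrite Ve !mulmxA PPt mul1mx.
    by rewrite row_mul row_diag_mx -scalemxAl -rowE.
  apply/negP => /eqP Pj0.
  have := congr1 (row j) PPt; rewrite row_mul Pj0 mul0mx.
  move=> /(congr1 (fun M : 'rV[C]_n => M 0 j)); rewrite !mxE eqxx /= => H.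
  have : (0 : C) == 1 by apply/eqP; exact: H.
  by rewrite eq_sym oner_eq0.
split.
  apply: complexI; rewrite rmorph_sum /=.
  rewrite [LHS](_ : _ = (map_mx toC (x^T *m V *m x)) 0 0); last by rewrite [RHS]mxE.
  rewrite !map_mxM -map_trmx -[map_mx _ x]/xc -[map_mx _ V]/Vc Ve !mulmxA -ytc -!mulmxA -/y mulmxA.
  rewrite mul_mx_diag mxE; apply: eq_bigr => j _.
  rewrite mxE rmorphM /=.
  rewrite [X in _ = X * _](_ : _ = y j 0 * (y j 0)^* ); last exact: RRe_real (yyr j).
  rewrite [X in _ = _ * X](_ : _ = d 0 j); last exact: RRe_real (dr j).
  rewrite !mxE.
  by rewrite mulrC mulrA.
apply: complexI; rewrite rmorph_sum /=.
rewrite [LHS](_ : _ = (map_mx toC (x^T *m x)) 0 0); last by rewrite [RHS]mxE.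
rewrite map_mxM -map_trmx -[map_mx _ x]/xc -[xc in _ *m xc]mul1mx -PtP !mulmxA -ytc -mulmxA -/y.
rewrite mxE; apply: eq_bigr => j _.
rewrite [RHS](_ : _ = y j 0 * (y j 0)^* ); last exact: RRe_real (yyr j).
by rewrite !mxE [RHS]mulrC.
Qed.

Lemma ray_upper n (V : 'M[R]_n) lmax : V^T = V ->
  (forall b, eigenvalue V b -> b <= lmax) ->
  forall x : 'cV[R]_n, (x^T *m V *m x) 0 0 <= lmax * (x^T *m x) 0 0.
Proof.
move=> Vs hM x; have [w [e [w0 [ee [E1 E2]]]]] := spec_decomp Vs x.
rewrite E1 E2 mulr_sumr; apply: ler_sum => j _.
by rewrite mulrC ler_wpM2r // hM.
Qed.

Lemma ray_lower n (V : 'M[R]_n) lmin : V^T = V ->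
  (forall b, eigenvalue V b -> lmin <= b) ->
  forall x : 'cV[R]_n, lmin * (x^T *m x) 0 0 <= (x^T *m V *m x) 0 0.
Proof.
move=> Vs hm x; have [w [e [w0 [ee [E1 E2]]]]] := spec_decomp Vs x.
rewrite E1 E2 mulr_sumr; apply: ler_sum => j _.
by rewrite mulrC ler_wpM2l // hm.
Qed.
End Spec.

End SpecM.

End Helpers.
Import Helpers Helpers.SpecM.

Theorem proposition1 (R : realType) (K N : nat) (Y : 'I_N -> 'I_(Q K) -> R)
    (n : 'I_(Q K) -> nat)
    (hn2 : forall z, (2 <= n z)%N)
    (hnN : (\sum_z n z)%N = N)
    (hV : VYhat Y n \in unitmx)
    (f : 'cV[R]_(Q K)) :
  let V := VYhat Y n in
  let fstar := proj (Mstar Y) f in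
  let v2 := qform V f in
  let vR2 := qform V fstar in
  (* (i) eigenvectors of V are the contrast columns: V = Q^{-1} G Lambda G^T *)
  (forall Lambda : {set 'I_K} -> R,
     V = ((Q K)%:R)^-1 *: \sum_(S : {set 'I_K}) (Lambda S *: (gvec R S *m (gvec R S)^T)) ->
     vR2 / v2 <= 1) /\
  (* (ii) bound via condition number *)
  (forall lmax lmin : R, is_max_eig V lmax -> is_min_eig V lmin ->
     vR2 / v2 <= (lmax / lmin) * (#|[set i | f i 0 != 0]|)%:R
                   * (#|Mstar Y|)%:R / (Q K)%:R).
Proof.
move=> V fstar v2 vR2.
have Vsym : V^T = V := VY_sym Y n.
have psd : forall h, 0 <= qform V h := @VY_psd R K N Y n hn2 hnN.
have Qp : 0 < (Q K)%:R :> R := Qr_gt0 R K.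
have v2ge : 0 <= v2 := psd f.
have vR2ge : 0 <= vR2 := psd fstar.
split.
  move=> Lam VE.
  have Lam0 T : 0 <= Lam T.
    have := psd (gvec R T); rewrite VE qform_G.
    rewrite (bigD1 T) //= big1 => [|S nST]; last first.
      by rewrite /cf gorth (negbTE nST) mul0r expr0n mulr0.
    rewrite /cf gorth eqxx mul1r addr0 pmulr_rge0 ?invr_gt0 //.
    by rewrite pmulr_lge0 // exprn_gt0.
  have key : vR2 <= v2.
    rewrite /vR2 /v2 VE !qform_G; apply: ler_wpM2l; first by rewrite invr_ge0 ltW.
    apply: ler_sum => S _; rewrite /fstar proj_cf.
    case: (S \in Mstar Y); rewrite ?mul1r // mul0r expr0n /= mulr0.
    by apply: mulr_ge0 => //; exact: sqr_ge0.
  case: (eqVneq v2 0) => [->|v2n0]; first by rewrite invr0 mulr0 ler01.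
  have v2p : 0 < v2 by rewrite lt_def v2n0.
  by rewrite ler_pdivrMr // mul1r.
move=> lmax lmin [eM hM] [em hm].
set sN := (#|[set i | f i 0 != 0]|)%:R : R.
set mN := (#|Mstar Y|)%:R : R.
set F2 := (f^T *m f) 0 0.
have lmin_pos : 0 < lmin.
  have [v vV v0] := eigenvalueP em.
  have vv : 0 < (v *m v^T) 0 0.
    have ge : 0 <= (v *m v^T) 0 0.
      by rewrite mxE; apply: sumr_ge0 => j _; rewrite mxE -expr2 sqr_ge0.
    rewrite lt_def ge andbT; apply: contra v0 => /eqP H.
    apply/eqP/matrixP => i j; rewrite (ord1 i) mxE.
    move: H; rewrite mxE => H.
    have Hj : v 0 j * v^T j 0 = 0.
      by apply: (psumr_eq0P _ H) => // k _; rewrite mxE -expr2 sqr_ge0.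
    by move: Hj; rewrite mxE -expr2 => /eqP; rewrite sqrf_eq0 => /eqP.
  have q : qform V v^T = lmin * (v *m v^T) 0 0.
    by rewrite /qform trmxK vV -scalemxAl mxE.
  have l0 : 0 <= lmin.
    by have := psd v^T; rewrite q pmulr_lge0.
  rewrite lt_def l0 andbT; apply/eqP => l00.
  move: vV; rewrite l00 scale0r => vV0.
  have : v = 0 by rewrite -[v]mulmx1 -(mulmxV hV) mulmxA vV0 mul0mx.
  by move/eqP: v0.
have lmax_pos : 0 < lmax := lt_le_trans lmin_pos (hM lmin em).
have up : vR2 <= lmax * (fstar^T *m fstar) 0 0 := ray_upper Vsym hM fstar.
have lo : lmin * F2 <= v2 := ray_lower Vsym hm f.
have F2ge : 0 <= F2 by rewrite /F2 mxE; apply: sumr_ge0 => j _; rewrite mxE -expr2 sqr_ge0.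
have RHSge : 0 <= lmax / lmin * sN * mN / (Q K)%:R.
  apply: divr_ge0; last exact: ltW.
  apply: mulr_ge0; last exact: ler0n.
  apply: mulr_ge0; last exact: ler0n.
  by apply: divr_ge0; exact: ltW.
case: (eqVneq v2 0) => [->|v2n0]; first by rewrite invr0 mulr0.
have v2p : 0 < v2 by rewrite lt_def v2n0.
rewrite ler_pdivrMr //.
have nf : (fstar^T *m fstar) 0 0 <= (Q K)%:R^-1 * (mN * (sN * F2)).
  rewrite /fstar norm_proj; apply: ler_wpM2l; first by rewrite invr_ge0 ltW.
  apply: le_trans (_ : \sum_(S in Mstar Y) sN * F2 <= _).
    by apply: ler_sum => S _; exact: cf_bound.
  by rewrite sumr_const -mulr_natl.
apply: le_trans up _.
apply: le_trans (_ : lmax * ((Q K)%:R^-1 * (mN * (sN * F2))) <= _).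
  by apply: ler_wpM2l => //; exact: ltW.
have E : lmax * ((Q K)%:R^-1 * (mN * (sN * F2))) =
    (lmax / lmin * sN * mN / (Q K)%:R) * (lmin * F2).
  by field; rewrite !gt_eqF.
rewrite E; apply: ler_wpM2l => //.
Qed.
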